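(* Let $f:\mathbb{R}^d\to\mathbb{R}$ be twice differentiable with $\inf f>-\infty$, and suppose there are constants $L,M>0$ with $\|\nabla f(x)-\nabla f(y)\|\le L\|x-y\|$ and $\|\nabla^2 f(x)-\nabla^2 f(y)\|_{\mathrm{op}}\le M\|x-y\|$ for all $x,y$. Let $x_k\in\mathbb{R}^d$, $s_k\in\mathbb{R}^d$, $x_{k+1}:=x_k+s_k$, $\theta\in(0,1)$, and $B_k,X\in\mathbb{S}^d$, and define $$B_{k+1}:=\frac{1-\theta}{1+\theta}(B_k+X).$$ Then $$\gamma_{k+1}-\gamma_k\le 2dL^2\theta+\frac{dM^2}{2\theta}\|s_k\|^2+\|X\|_F^2-2\langle X,G_k-B_k\rangle.$$
   Context: $\mathbb{S}^d$ is the set of real symmetric $d\times d$ matrices with inner product $\langle A,B\rangle=\mathrm{tr}(A^\top B)$; $\|\cdot\|_F$ is the Frobenius norm and $\|\cdot\|_{\mathrm{op}}$ the spectral norm. For $j\in\{k,k+1\}$, $$\gamma_j:=\|B_j-\nabla^2 f(x_j)\|_F^2-\|\nabla^2 f(x_j)\|_F^2+\frac{\theta}{1-\theta}\|B_j\|_F^2,$$ and $G_k:=\int_0^1\nabla^2 f(x_k+\tau s_k)\,d\tau$. *)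

(* Defs.v *)
From HB Require Import structures.
From mathcomp Require Import all_boot all_order all_algebra.
From mathcomp Require Import all_classical all_reals all_analysis.
Set Implicit Arguments. Unset Strict Implicit. Unset Printing Implicit Defensive.
Import Order.TTheory GRing.Theory Num.Theory.
Import numFieldNormedType.Exports.
Local Open Scope classical_set_scope.
Local Open Scope ring_scope.

Section Defs.
Variables (R : realType) (d : nat).

Definition enorm (v : 'cV[R]_d) : R := Num.sqrt (\sum_(i < d) v i 0 ^+ 2).

Definition frob (A : 'M[R]_d) : R :=
  Num.sqrt (\sum_(i < d) \sum_(j < d) A i j ^+ 2).

Definition inner (A B : 'M[R]_d) : R := \tr (A^T *m B).

Definition opnorm (A : 'M[R]_d) : R :=
  sup [set r | exists v : 'cV[R]_d, enorm v <= 1 /\ r = enorm (A *m v)].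

Definition grad (f : 'cV[R]_d -> R) (x : 'cV[R]_d) : 'cV[R]_d :=
  \col_i ('d f x (delta_mx i 0 : 'cV[R]_d)).

Definition hess (f : 'cV[R]_d -> R) (x : 'cV[R]_d) : 'M[R]_d :=
  \matrix_(i, j) ('d (grad f) x (delta_mx j 0 : 'cV[R]_d) i 0).

Definition Gk (f : 'cV[R]_d -> R) (x s : 'cV[R]_d) : 'M[R]_d :=
  \matrix_(i, j) Rintegral (@lebesgue_measure R) `[0%R, 1%R]
                   (fun t : R => hess f (x + t *: s) i j).

Definition gamma (f : 'cV[R]_d -> R) (theta : R) (x : 'cV[R]_d) (B : 'M[R]_d) : R :=
  frob (B - hess f x) ^+ 2 - frob (hess f x) ^+ 2
  + theta / (1 - theta) * frob B ^+ 2.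

End Defs.

(* Main.v *)
Require Import Defs.
From HB Require Import structures.
From mathcomp Require Import all_boot all_order all_algebra.
From mathcomp Require Import all_classical all_reals all_analysis.
From mathcomp Require Import ring lra unstable.
Import Order.TTheory GRing.Theory Num.Theory.
Import numFieldNormedType.Exports.
Set Implicit Arguments. Unset Strict Implicit. Unset Printing Implicit Defensive.
Local Open Scope classical_set_scope.
Local Open Scope ring_scope.

Lemma core_scalar (R : realType) (th b x h0 h1 g : R) : 0 < th < 1 ->
 ((((1-th)/(1+th))*(b+x) - h1)^+2 - h1^+2 + th/(1-th)*(((1-th)/(1+th))*(b+x))^+2)
 - ((b-h0)^+2 - h0^+2 + th/(1-th)*b^+2) - (x^+2 - 2*(x*(g-b)))
 <= (1-th)/th*(h0-g)^+2 + (1+th)/th*(g-h1)^+2 + 2*th*h1^+2.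
Proof.
move=> /andP[t0 t1].
set a := th/(1-th). set k := th*(3+th)/(1+th)^+2. set e := 2/(1+th).
set c := (1-th)/(1+th).
have a0 : 0 < a by rewrite divr_gt0 // subr_gt0.
have k0 : 0 < k by rewrite divr_gt0 ?mulr_gt0 ?exprn_gt0 //; lra.
have e0 : 0 < e by rewrite divr_gt0 //; lra.
rewrite -subr_ge0.
have -> : (1-th)/th*(h0-g)^+2 + (1+th)/th*(g-h1)^+2 + 2*th*h1^+2 -
 (((c*(b+x) - h1)^+2 - h1^+2 + a*(c*(b+x))^+2)
 - ((b-h0)^+2 - h0^+2 + a*b^+2) - (x^+2 - 2*(x*(g-b))))
 = (a*b-(h0-g))^+2/a + (k*(b+x)-(g-c*h1))^+2/k + (e*(g-h1)-(1-c)*h1)^+2/(e*k).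
  rewrite /a /k /e /c; field.
  have n1 : 1 + th != 0 by rewrite gt_eqF //; lra.
  have n2 : 3 + th != 0 by rewrite gt_eqF //; lra.
  have n3 : th != 0 by rewrite gt_eqF.
  have n4 : 1 - th != 0 by rewrite gt_eqF //; lra.
  by rewrite n1 n2 n3 n4.
rewrite !addr_ge0 // divr_ge0 ?sqr_ge0 ?ltW // mulr_gt0 //.
Qed.

Definition S2 (R : realType) (d : nat) (A : 'M[R]_d) : R :=
  \sum_(i < d) \sum_(j < d) A i j ^+ 2.

Lemma S2_ge0 (R : realType) (d : nat) (A : 'M[R]_d) : 0 <= S2 A.
Proof. by apply: sumr_ge0 => i _; apply: sumr_ge0 => j _; exact: sqr_ge0. Qed.

Lemma frob2 (R : realType) (d : nat) (A : 'M[R]_d) : frob A ^+ 2 = S2 A.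
Proof. by rewrite /frob sqr_sqrtr // S2_ge0. Qed.

Lemma enorm_ge0 (R : realType) (d : nat) (v : 'cV[R]_d) : 0 <= enorm v.
Proof. exact: sqrtr_ge0. Qed.

Lemma enorm2 (R : realType) (d : nat) (v : 'cV[R]_d) :
  enorm v ^+ 2 = \sum_(i < d) v i 0 ^+ 2.
Proof. by rewrite /enorm sqr_sqrtr // sumr_ge0 // => i _; exact: sqr_ge0. Qed.

Lemma innerE (R : realType) (d : nat) (A B : 'M[R]_d) :
  inner A B = \sum_(i < d) \sum_(j < d) A i j * B i j.
Proof.
rewrite /inner /mxtrace exchange_big /=; apply: eq_bigr => i _.
by rewrite !mxE; apply: eq_bigr => j _; rewrite mxE.
Qed.

Lemma enormZ (R : realType) (d : nat) (k : R) (v : 'cV[R]_d) :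
  enorm (k *: v) = `|k| * enorm v.
Proof.
rewrite /enorm -sqrtr_sqr -sqrtrM ?sqr_ge0 //; congr Num.sqrt.
by rewrite mulr_sumr; apply: eq_bigr => i _; rewrite mxE exprMn.
Qed.

Lemma CS (R : realType) (I : finType) (F G : I -> R) :
  \sum_i F i * G i <= Num.sqrt (\sum_i F i ^+ 2) * Num.sqrt (\sum_i G i ^+ 2).
Proof.
have hF : 0 <= \sum_i F i ^+ 2 by apply: sumr_ge0 => i _; exact: sqr_ge0.
have hG : 0 <= \sum_i G i ^+ 2 by apply: sumr_ge0 => i _; exact: sqr_ge0.
have [F0|Fp] := eqVneq (\sum_i F i ^+ 2) 0.
  have : forall i, F i = 0.
    move=> i; apply/eqP; rewrite -sqrf_eq0; apply/eqP.
    have := @psumr_eq0P _ _ xpredT (fun j => F j ^+ 2) (fun j _ => sqr_ge0 _) F0.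
    by move=> /(_ i isT).
  move=> Fz; rewrite big1 ?mulr_ge0 ?sqrtr_ge0 // => i _; by rewrite Fz mul0r.
have [G0|Gp] := eqVneq (\sum_i G i ^+ 2) 0.
  have : forall i, G i = 0.
    move=> i; apply/eqP; rewrite -sqrf_eq0; apply/eqP.
    have := @psumr_eq0P _ _ xpredT (fun j => G j ^+ 2) (fun j _ => sqr_ge0 _) G0.
    by move=> /(_ i isT).
  move=> Gz; rewrite big1 ?mulr_ge0 ?sqrtr_ge0 // => i _; by rewrite Gz mulr0.
set a := Num.sqrt (\sum_i F i ^+ 2).
set b := Num.sqrt (\sum_i G i ^+ 2).
have a0 : 0 < a by rewrite sqrtr_gt0 lt0r Fp.
have b0 : 0 < b by rewrite sqrtr_gt0 lt0r Gp.
have la0 : 0 < b / a by rewrite divr_gt0.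
have key : forall i, F i * G i <= ((b / a) * F i ^+ 2 + (a / b) * G i ^+ 2) / 2.
  move=> i; rewrite -subr_ge0.
  have -> : ((b / a) * F i ^+ 2 + (a / b) * G i ^+ 2) / 2 - F i * G i
     = (b * F i - a * G i) ^+ 2 / (2 * a * b).
    field; by rewrite !gt_eqF.
  by rewrite divr_ge0 ?sqr_ge0 // !mulr_ge0 // ltW.
apply: le_trans (ler_sum _ (fun i _ => key i)) _.
rewrite -mulr_suml big_split /= -!mulr_sumr -(sqr_sqrtr hF) -(sqr_sqrtr hG) -/a -/b.
rewrite le_eqVlt; apply/orP; left; apply/eqP; field; by rewrite !gt_eqF.
Qed.

Lemma CSabs (R : realType) (I : finType) (F G : I -> R) :
  (\sum_i F i * G i) ^+ 2 <= (\sum_i F i ^+ 2) * (\sum_i G i ^+ 2).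
Proof.
have hF : 0 <= \sum_i F i ^+ 2 by apply: sumr_ge0 => i _; exact: sqr_ge0.
have hG : 0 <= \sum_i G i ^+ 2 by apply: sumr_ge0 => i _; exact: sqr_ge0.
have h1 := CS F G.
have h2 := CS (fun i => - F i) G.
have e : \sum_i (- F i) ^+ 2 = \sum_i F i ^+ 2 by apply: eq_bigr => i _; rewrite sqrrN.
rewrite e in h2.
have e2 : \sum_i - F i * G i = - \sum_i F i * G i.
  by rewrite -sumrN; apply: eq_bigr => i _; rewrite mulNr.
rewrite e2 in h2.
rewrite -(sqr_sqrtr hF) -(sqr_sqrtr hG) -exprMn.
move: h1 h2; set u := \sum_i F i * G i; set p := Num.sqrt _ * Num.sqrt _ => h1 h2.
have hp : 0 <= p by rewrite /p mulr_ge0 ?sqrtr_ge0.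
nra.
Qed.

Lemma S2_col (R : realType) (d : nat) (A : 'M[R]_d) :
  S2 A = \sum_(j < d) enorm (col j A) ^+ 2.
Proof.
rewrite /S2 exchange_big /=; apply: eq_bigr => j _; rewrite enorm2.
by apply: eq_bigr => i _; rewrite !mxE.
Qed.

Lemma S2_pair (R : realType) (d : nat) (A : 'M[R]_d) :
  S2 A = \sum_(p : 'I_d * 'I_d) A p.1 p.2 ^+ 2.
Proof. by rewrite /S2 pair_big. Qed.

Lemma enorm_mul_le (R : realType) (d : nat) (A : 'M[R]_d) (v : 'cV[R]_d) :
  enorm (A *m v) <= frob A * enorm v.
Proof.
rewrite -(@ler_pXn2r _ 2) ?nnegrE ?mulr_ge0 ?enorm_ge0 ?sqrtr_ge0 //.
rewrite exprMn frob2 !enorm2 /S2 mulr_suml; apply: ler_sum => i _.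
by rewrite !mxE; apply: CSabs.
Qed.

Lemma opnorm_ge (R : realType) (d : nat) (A : 'M[R]_d) (v : 'cV[R]_d) :
  enorm v <= 1 -> enorm (A *m v) <= opnorm A.
Proof.
move=> v1; apply: sup_upper_bound; last by exists v.
split; first by exists (enorm (A *m v)), v.
exists (frob A) => _ [w [w1 ->]].
apply: le_trans (enorm_mul_le A w) _.
by rewrite -[leRHS]mulr1 ler_wpM2l ?sqrtr_ge0.
Qed.

Lemma enorm_delta (R : realType) (d : nat) (j : 'I_d) :
  enorm (delta_mx j 0 : 'cV[R]_d) = 1.
Proof.
rewrite /enorm (bigD1 j) //= big1 ?addr0 ?mxE ?eqxx ?expr1n ?sqrtr1 //.
by move=> i /negbTE ij; rewrite mxE ij /= expr0n.
Qed.

Lemma col_op (R : realType) (d : nat) (A : 'M[R]_d) (j : 'I_d) :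
  enorm (col j A) <= opnorm A.
Proof. by rewrite colE; apply: opnorm_ge; rewrite enorm_delta. Qed.

Lemma entry_op (R : realType) (d : nat) (A : 'M[R]_d) (i j : 'I_d) :
  `|A i j| <= opnorm A.
Proof.
apply: le_trans (col_op A j); rewrite -sqrtr_sqr /enorm ler_sqrt.
  by rewrite (bigD1 i) //= mxE lerDl sumr_ge0 // => k _; exact: sqr_ge0.
by apply: sumr_ge0 => k _; exact: sqr_ge0.
Qed.

Lemma S2_op (R : realType) (d : nat) (A : 'M[R]_d) :
  S2 A <= d%:R * opnorm A ^+ 2.
Proof.
rewrite S2_col; apply: le_trans (ler_sum _ (fun j _ => _ : enorm (col j A) ^+ 2 <= opnorm A ^+ 2)) _.
  move=> j _; by rewrite !expr2 ler_pM ?enorm_ge0 ?col_op.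
by rewrite sumr_const card_ord mulr_natl.
Qed.

Lemma cvg_sumR (R : realType) (T : Type) (F : set_system T) (FF : Filter F)
  (I : Type) (r : seq I) (f : I -> T -> R) (l : I -> R) :
  (forall i, f i x @[x --> F] --> l i) ->
  (\sum_(i <- r) f i x) @[x --> F] --> \sum_(i <- r) l i.
Proof.
move=> hf; elim: r => [|a r IH].
  rewrite big_nil; under eq_cvg do rewrite big_nil; exact: cvg_cst.
rewrite big_cons; under eq_cvg do rewrite big_cons.
exact: cvgD.
Qed.

Lemma dLip (R : realType) (d : nat) (g : 'cV[R]_d -> 'cV[R]_d) (L : R)
  (x v : 'cV[R]_d) :
  differentiable g x -> (forall y z, enorm (g y - g z) <= L * enorm (y - z)) ->
  0 <= L ->
  \sum_i ('d g x v) i 0 ^+ 2 <= (L * enorm v) ^+ 2.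
Proof.
move=> dg hL L0; rewrite -deriveE //.
have hc := @diff_derivable _ _ _ g x v dg.
apply: (@cvgr_to_le _ (0 : R)^' _ R
   (fun h : R => \sum_i (h^-1 *: ((g \o shift x) (h *: v) - g x)) i 0 ^+ 2)).
  apply: cvg_sumR => i.
  rewrite expr2; under eq_cvg do rewrite expr2.
  have hi : (h^-1 *: ((g \o shift x) (h *: v) - g x)) i 0 @[h --> (0:R)^'] --> ('D_v g x) i 0.
    exact: (continuous_cvg _ (@coord_continuous _ _ _ i 0 _) hc).
  exact: cvgM.
near=> h.
have h0 : h != 0 by near: h; exact: nbhs_dnbhs_neq.
rewrite -enorm2 enormZ.
have := hL (h *: v + x) x; rewrite addrK enormZ => H.
have hp : 0 < `|h| by rewrite normr_gt0.
have e : `|h^-1| * enorm ((g \o shift x) (h *: v) - g x) <= L * enorm v.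
  rewrite normfV ler_pdivrMl // mulrCA; exact: H.
rewrite !expr2 ler_pM // ?mulr_ge0 ?enorm_ge0 //.
Unshelve. all: by end_near.
Qed.

Lemma hess_bound (R : realType) (d : nat) (f : 'cV[R]_d -> R) (L : R) (x : 'cV[R]_d) :
  differentiable (grad f) x ->
  (forall y z, enorm (grad f y - grad f z) <= L * enorm (y - z)) -> 0 <= L ->
  S2 (hess f x) <= d%:R * L ^+ 2.
Proof.
move=> dg hL L0; rewrite S2_col.
apply: le_trans (ler_sum _ (fun j _ => _ : enorm (col j (hess f x)) ^+ 2 <= L ^+ 2)) _.
  move=> j _; rewrite enorm2.
  have := dLip (delta_mx j 0) dg hL L0; rewrite enorm_delta mulr1.
  apply: le_trans; rewrite le_eqVlt; apply/orP; left; apply/eqP; apply: eq_bigr => i _; rewrite !mxE.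
  by []. 
by rewrite big_const_ord iter_addr addr0 mulr_natl.
Qed.

Lemma lip_cont (R : realType) (phi : R -> R) (K : R) : 0 <= K ->
  (forall u t, `|phi u - phi t| <= K * `|u - t|) -> continuous phi.
Proof.
move=> K0 H t; apply/cvgrPdist_lt => e e0.
have K1 : 0 < K + 1 by lra.
have : (fun u : R => u) @ nbhs t --> t by exact: cvg_id.
move=> /cvgr_dist_lt /(_ (e / (K + 1)) (divr_gt0 e0 K1)).
apply: filterS => u hu.
apply: le_lt_trans (H t u) _.
apply: le_lt_trans (_ : K * `|t - u| <= (K + 1) * `|t - u|) _.
  by rewrite ler_wpM2r // lerDl.
by rewrite mulrC -ltr_pdivlMr.
Qed.

Definition mu01 (R : realType) := (@lebesgue_measure R).

Lemma meas01 (R : realType) : measurable (`[0%R, 1%R] : set R).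
Proof. exact: measurable_itv. Qed.

Lemma cont_int01 (R : realType) (phi : R -> R) : continuous phi ->
  (@lebesgue_measure R).-integrable `[0%R, 1%R] (EFin \o phi).
Proof.
move=> c; apply: continuous_compact_integrable; first exact: segment_compact.
exact: continuous_subspaceT.
Qed.

Lemma Rint_cst01 (R : realType) (c : R) :
  Rintegral (@lebesgue_measure R) `[0%R, 1%R] (fun _ => c) = c.
Proof.
rewrite Rintegral_cst ?meas01 //. transitivity (c * fine (1%:E : \bar R)); last by rewrite mulr1. congr (_ * fine _). apply: etrans (lebesgue_measure_itv _) _. by rewrite /= lte_fin ltr01 oppr0 adde0.
Qed.

Lemma Rint_id01 (R : realType) :
  Rintegral (@lebesgue_measure R) `[0%R, 1%R] (fun t => t) = 2^-1.
Proof.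
have h := @Rintegration_by_substitution_onem R (fun t => t) 1.
rewrite onem1 in h.
have c1 : {within `[0%R, 1%R], continuous (fun t : R => t)}.
  by apply: continuous_subspaceT => t; exact: cvg_id.
have : ((0:R) <= 1) && ((1:R) <= 1) by rewrite ler01 lexx.
move=> /h /(_ c1) {}h.
have ic : forall c : R, (@lebesgue_measure R).-integrable `[0%R, 1%R] (EFin \o (fun _ => c)).
  by move=> c; apply: cont_int01 => t; exact: cvg_cst.
have ii : (@lebesgue_measure R).-integrable `[0%R, 1%R] (EFin \o (fun t : R => t)).
  by apply: cont_int01 => t; exact: cvg_id.
move: h; rewrite /onem RintegralB ?meas01 // Rint_cst01.
set I := Rintegral _ _ _ => h.
lra.
Qed.

Lemma Rint_sum (R : realType) (I : Type) (r : seq I) (F : I -> R -> R) :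
  (forall i, continuous (F i)) ->
  continuous (fun t => \sum_(i <- r) F i t) /\
  \sum_(i <- r) Rintegral (@lebesgue_measure R) `[0%R, 1%R] (F i) =
  Rintegral (@lebesgue_measure R) `[0%R, 1%R] (fun t => \sum_(i <- r) F i t).
Proof.
move=> cF.
have cS : forall r : seq I, continuous (fun t => \sum_(i <- r) F i t).
  by move=> r' t; apply: cvg_sumR => i; exact: cF.
 split; first exact: cS.
elim: r => [|a r IHe].
  by rewrite big_nil; under eq_Rintegral do rewrite big_nil; rewrite Rint_cst01.
rewrite big_cons IHe; under [RHS]eq_Rintegral do rewrite big_cons.
by rewrite RintegralD ?meas01 //; apply: cont_int01.
Qed.

Lemma int_bound (R : realType) (d : nat) (h : R -> 'M[R]_d) (H : 'M[R]_d) (w : R -> R) :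
  (forall i j, continuous (fun t => h t i j)) -> continuous w ->
  (forall t, 0 <= t -> t <= 1 -> Num.sqrt (S2 (h t - H)) <= w t) ->
  S2 ((\matrix_(i, j) Rintegral (@lebesgue_measure R) `[0%R, 1%R] (fun t => h t i j)) - H)
    <= (Rintegral (@lebesgue_measure R) `[0%R, 1%R] w) ^+ 2.
Proof.
move=> ch cw hw.
set C := (\matrix_(i, j) _ - H).
have cA : forall i j, continuous (fun t => h t i j - H i j).
  by move=> i j t; apply: cvgB; [exact: ch|exact: cvg_cst].
have eC : forall i j, C i j = Rintegral (@lebesgue_measure R) `[0%R, 1%R] (fun t => h t i j - H i j).
  move=> i j; rewrite !mxE RintegralB ?meas01 ?Rint_cst01 //; apply: cont_int01 => //.
  by move=> t; exact: cvg_cst.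
pose G (p : 'I_d * 'I_d) (t : R) := C p.1 p.2 * (h t - H) p.1 p.2.
have cG : forall p, continuous (G p).
  move=> p.
  have -> : G p = fun t => C p.1 p.2 * (h t p.1 p.2 - H p.1 p.2).
    by apply/funext => t; rewrite /G !mxE.
  by move=> t; apply: cvgM; [exact: cvg_cst|exact: cA].
have [cS eS] := Rint_sum (index_enum (prod 'I_d 'I_d)) cG.
have e1 : S2 C = Rintegral (@lebesgue_measure R) `[0%R, 1%R] (fun t => \sum_p G p t).
  rewrite -eS S2_pair; apply: eq_bigr => p _.
  rewrite /G expr2 {2}eC -RintegralZl ?meas01 //; last exact: cont_int01.
  by apply: eq_Rintegral => t _; rewrite !mxE.
set u := Num.sqrt (S2 C).
have e2 : Rintegral (@lebesgue_measure R) `[0%R, 1%R] (fun t => \sum_p G p t)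
   <= Rintegral (@lebesgue_measure R) `[0%R, 1%R] (fun t => u * w t).
  apply: le_Rintegral; rewrite ?meas01 //; try apply: cont_int01 => //.
    by move=> t; apply: cvgM; [exact: cvg_cst|exact: cw].
  move=> t; rewrite /= in_itv /= => /andP[t0 t1].
  apply: le_trans (CS (fun p => C p.1 p.2) (fun p => (h t - H) p.1 p.2)) _.
  rewrite -!S2_pair ler_wpM2l ?sqrtr_ge0 //; exact: hw.
rewrite RintegralZl ?meas01 in e2; last exact: cont_int01.
have u0 : 0 <= u by exact: sqrtr_ge0.
have uu : S2 C = u ^+ 2 by rewrite sqr_sqrtr // S2_ge0.
rewrite e1 in uu; rewrite e1 uu; rewrite uu in e2.
  nra.
exact: meas01.
Qed.

Lemma opnorm_ge0 (R : realType) (d : nat) (A : 'M[R]_d) : 0 <= opnorm A.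
Proof.
have := @opnorm_ge R d A 0; rewrite mulmx0.
have -> : enorm (0 : 'cV[R]_d) = 0.
  by rewrite /enorm big1 ?sqrtr0 // => i _; rewrite mxE expr0n.
by move=> h; apply: h; exact: ler01.
Qed.

Lemma sqrt_S2_le (R : realType) (d : nat) (A : 'M[R]_d) (b : R) :
  opnorm A <= b -> Num.sqrt (S2 A) <= Num.sqrt d%:R * b.
Proof.
move=> hb.
have b0 : 0 <= b := le_trans (opnorm_ge0 A) hb.
rewrite -(ger0_norm b0) -sqrtr_sqr -sqrtrM ?ler0n // ler_sqrt ?mulr_ge0 ?ler0n ?sqr_ge0 //.
apply: le_trans (S2_op A) _; rewrite ler_wpM2l ?ler0n //.
by rewrite !expr2 ler_pM ?opnorm_ge0.
Qed.

Lemma mxBE (R : realType) (d : nat) (A B : 'M[R]_d) i j : (A - B) i j = A i j - B i j.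
Proof. by rewrite !mxE. Qed.

Lemma hh_cont (R : realType) (d : nat) (f : 'cV[R]_d -> R) (M : R) (xk sk : 'cV[R]_d) :
  0 <= M ->
  (forall x y, opnorm (hess f x - hess f y) <= M * enorm (x - y)) ->
  forall i j, continuous (fun t : R => hess f (xk + t *: sk) i j).
Proof.
move=> M0 hH i j.
apply: (@lip_cont _ _ (M * enorm sk)); first by rewrite mulr_ge0 ?enorm_ge0.
move=> u t.
rewrite -mxBE.
apply: le_trans (entry_op _ i j) _. 
apply: le_trans (hH _ _) _.
have -> : xk + u *: sk - (xk + t *: sk) = (u - t) *: sk.
  by rewrite scalerBl opprD addrACA subrr add0r.
by rewrite enormZ -[in leRHS]mulrA [enorm sk * _]mulrC.
Qed.

Lemma GH0 (R : realType) (d : nat) (f : 'cV[R]_d -> R) (M : R) (xk sk : 'cV[R]_d) :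
  0 <= M ->
  (forall x y, opnorm (hess f x - hess f y) <= M * enorm (x - y)) ->
  S2 (Gk f xk sk - hess f xk) <= d%:R * M ^+ 2 * enorm sk ^+ 2 / 4.
Proof.
move=> M0 hH.
set c := Num.sqrt d%:R * M * enorm sk.
have cc : c ^+ 2 = d%:R * M ^+ 2 * enorm sk ^+ 2 by rewrite /c !exprMn sqr_sqrtr ?ler0n.
have cw : continuous (fun t : R => c * t).
  by move=> t; apply: cvgM; [exact: cvg_cst|exact: cvg_id].
have hw : forall t : R, 0 <= t -> t <= 1 ->
    Num.sqrt (S2 (hess f (xk + t *: sk) - hess f xk)) <= c * t.
  move=> t t0 t1; rewrite /c -!mulrA; apply: sqrt_S2_le.
  apply: le_trans (hH _ _) _.
  rewrite addrAC subrr add0r enormZ ger0_norm // [_ * t]mulrC mulrA.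
  by [].
have h : S2 (Gk f xk sk - hess f xk) <= (Rintegral (@lebesgue_measure R) `[0%R, 1%R] (fun t => c * t)) ^+ 2
  := @int_bound R d (fun t => hess f (xk + t *: sk)) (hess f xk) (fun t => c * t) (hh_cont M0 hH) cw hw.
apply: le_trans h _.
rewrite RintegralZl ?meas01 ?Rint_id01; last by apply: cont_int01 => t; exact: cvg_id.
rewrite exprMn cc.
by rewrite le_eqVlt; apply/orP; left; apply/eqP; field.
exact: meas01.
Qed.

Lemma GH1 (R : realType) (d : nat) (f : 'cV[R]_d -> R) (M : R) (xk sk : 'cV[R]_d) :
  0 <= M ->
  (forall x y, opnorm (hess f x - hess f y) <= M * enorm (x - y)) ->
  S2 (Gk f xk sk - hess f (xk + sk)) <= d%:R * M ^+ 2 * enorm sk ^+ 2 / 4.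
Proof.
move=> M0 hH.
set c := Num.sqrt d%:R * M * enorm sk.
have cc : c ^+ 2 = d%:R * M ^+ 2 * enorm sk ^+ 2 by rewrite /c !exprMn sqr_sqrtr ?ler0n.
have c1 : continuous (fun t : R => 1 - t).
  by move=> t; apply: cvgB; [exact: cvg_cst|exact: cvg_id].
have cw : continuous (fun t : R => c * (1 - t)).
  by move=> t; apply: cvgM; [exact: cvg_cst|exact: c1].
have hw : forall t : R, 0 <= t -> t <= 1 ->
    Num.sqrt (S2 (hess f (xk + t *: sk) - hess f (xk + sk))) <= c * (1 - t).
  move=> t t0 t1; rewrite /c -!mulrA; apply: sqrt_S2_le.
  apply: le_trans (hH _ _) _.
  have -> : xk + t *: sk - (xk + sk) = (t - 1) *: sk.
    by rewrite scalerBl scale1r opprD addrACA subrr add0r.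
  rewrite enormZ ler0_norm ?subr_le0 // opprB.
  by rewrite [_ * (1 - t)]mulrC mulrA.
have h : S2 (Gk f xk sk - hess f (xk + sk)) <= (Rintegral (@lebesgue_measure R) `[0%R, 1%R] (fun t => c * (1 - t))) ^+ 2
  := @int_bound R d (fun t => hess f (xk + t *: sk)) (hess f (xk + sk)) (fun t => c * (1 - t)) (hh_cont M0 hH) cw hw.
apply: le_trans h _.
rewrite RintegralZl ?meas01; last by apply: cont_int01.
rewrite RintegralB ?meas01 ?Rint_cst01 ?Rint_id01; last 2 first.
- by apply: cont_int01 => t; exact: cvg_cst.
- by apply: cont_int01 => t; exact: cvg_id.
rewrite exprMn cc.
by rewrite le_eqVlt; apply/orP; left; apply/eqP; field.
all: exact: meas01.
Qed.


Lemma eqle (R : realType) (a b : R) : a = b -> a <= b.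
Proof. by move=> ->. Qed.

Lemma final_alg (R : realType) (d : nat) (th : R) (Bk X H0 H1 G : 'M[R]_d) (KL KM : R) :
  0 < th < 1 -> S2 H1 <= KL -> S2 (G - H0) <= KM -> S2 (G - H1) <= KM ->
  S2 (((1 - th) / (1 + th)) *: (Bk + X) - H1) - S2 H1
    + th / (1 - th) * S2 (((1 - th) / (1 + th)) *: (Bk + X))
  - (S2 (Bk - H0) - S2 H0 + th / (1 - th) * S2 Bk)
  - (S2 X - 2 * inner X (G - Bk))
  <= (1 - th) / th * KM + (1 + th) / th * KM + 2 * th * KL.
Proof.
move=> hth hA hB hC.
have /andP[t0 t1] := hth.
apply: (@le_trans _ _ (\sum_i \sum_j ((1 - th) / th * (G i j - H0 i j) ^+ 2
    + (1 + th) / th * (G i j - H1 i j) ^+ 2 + 2 * th * H1 i j ^+ 2))).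
  rewrite innerE /S2 !mulr_sumr.
  do 6 rewrite -?sumrB -?big_split.
  apply: ler_sum => i _.
  rewrite !mulr_sumr.
  do 6 rewrite -?sumrB -?big_split.
  apply: ler_sum => j _; rewrite !mxE.
  have hc := core_scalar (Bk i j) (X i j) (H0 i j) (H1 i j) (G i j) hth.
  apply: le_trans (le_trans (eqle _) hc) (eqle _); [by []|by rewrite -[H0 i j - G i j]opprB sqrrN].
have e : \sum_i \sum_j ((1 - th) / th * (G i j - H0 i j) ^+ 2
    + (1 + th) / th * (G i j - H1 i j) ^+ 2 + 2 * th * H1 i j ^+ 2)
  = (1 - th) / th * S2 (G - H0) + (1 + th) / th * S2 (G - H1) + 2 * th * S2 H1.
  rewrite /S2 !mulr_sumr -!big_split; apply: eq_bigr => i _.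
  rewrite !mulr_sumr -!big_split; apply: eq_bigr => j _.
  by rewrite !mxE.
rewrite e; apply: lerD; first apply: lerD.
- by rewrite ler_wpM2l // divr_ge0 //; lra.
- by rewrite ler_wpM2l // divr_ge0 //; lra.
- by rewrite ler_wpM2l //; lra.
Qed.


Theorem lemma3p2 (R : realType) (d : nat) (f : 'cV[R]_d -> R) (L M : R)
  (hdf : forall x, differentiable f x)
  (hd2f : forall x, differentiable (grad f) x)
  (hinf : exists c : R, forall x, c <= f x)
  (hL : 0 < L) (hM : 0 < M)
  (hLip : forall x y, enorm (grad f x - grad f y) <= L * enorm (x - y))
  (hHess : forall x y, opnorm (hess f x - hess f y) <= M * enorm (x - y))
  (xk sk : 'cV[R]_d) (theta : R) (htheta : 0 < theta < 1)
  (Bk X : 'M[R]_d) (hBk : Bk^T = Bk) (hX : X^T = X) :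
  let xk1 := xk + sk in
  let Bk1 := ((1 - theta) / (1 + theta)) *: (Bk + X) in
  gamma f theta xk1 Bk1 - gamma f theta xk Bk
    <= 2 * d%:R * L ^+ 2 * theta
       + d%:R * M ^+ 2 / (2 * theta) * enorm sk ^+ 2
       + frob X ^+ 2 - 2 * inner X (Gk f xk sk - Bk).
Proof.
cbv zeta.
have hth := htheta.
have /andP[t0 t1] := htheta.
have hA : S2 (hess f (xk + sk)) <= d%:R * L ^+ 2 := hess_bound (hd2f _) hLip (ltW hL).
have hB := @GH0 R d f M xk sk (ltW hM) hHess.
have hC := @GH1 R d f M xk sk (ltW hM) hHess.
have := @final_alg R d theta Bk X (hess f xk) (hess f (xk + sk)) (Gk f xk sk)
  (d%:R * L ^+ 2) (d%:R * M ^+ 2 * enorm sk ^+ 2 / 4) hth hA hB hC.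
rewrite /gamma.
move: (hess f xk) (hess f (xk + sk)) (Gk f xk sk) => H0 H1 G h.
rewrite !frob2.
have e : (1 - theta) / theta * (d%:R * M ^+ 2 * enorm sk ^+ 2 / 4)
   + (1 + theta) / theta * (d%:R * M ^+ 2 * enorm sk ^+ 2 / 4)
   + 2 * theta * (d%:R * L ^+ 2)
   = 2 * d%:R * L ^+ 2 * theta + d%:R * M ^+ 2 / (2 * theta) * enorm sk ^+ 2.
  by field; rewrite gt_eqF.
clear hA hB hC hLip hHess hdf hd2f hinf hBk hX.
lra.
Qed.
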